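(* Let $X$ be a complex Banach space and let $A:\mathcal{D}(\mathbb{R})\to L(X)$ be a linear map which is multiplicative, i.e. $A(\phi\psi)=A(\phi)A(\psi)$ for all $\phi,\psi\in\mathcal{D}(\mathbb{R})$ (no continuity is assumed). Then for every $\chi\in\mathcal{D}(\mathbb{R})$ the function $$\mathbb{C}\setminus\mathbb{R}\ni z\longmapsto A\Big(\xi\mapsto \frac{\chi(\xi)}{z-\xi}\Big)\in L(X)$$ is strongly holomorphic on $\mathbb{C}\setminus\mathbb{R}$.
   Context: $L(X)$ denotes the algebra of bounded linear operators on $X$ with the operator norm; $\mathcal{D}(\mathbb{R})=C_c^\infty(\mathbb{R})$ (complex-valued). For $z\notin\mathbb{R}$ the function $\xi\mapsto\chi(\xi)/(z-\xi)$ belongs to $\mathcal{D}(\mathbb{R})$. ''Strongly holomorphic'' means holomorphic as an $L(X)$-valued function (complex differentiable with respect to the operator norm). *)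

(* Defs.v *)
From Stdlib Require Import Reals.
From Coquelicot Require Import Coquelicot.

Definition smooth_C (f : R -> C) : Prop :=
  forall (n : nat) (t : R),
    ex_derive_n (fun s => Re (f s)) n t /\ ex_derive_n (fun s => Im (f s)) n t.

Definition compact_support (f : R -> C) : Prop :=
  exists M : R, forall t : R, (M < Rabs t)%R -> f t = 0%C.

Definition test_fun (f : R -> C) : Prop := smooth_C f /\ compact_support f.

Definition bounded_op {X : NormedModule C_AbsRing} (T : X -> X) : Prop :=
  (forall x y : X, T (plus x y) = plus (T x) (T y)) /\
  (forall (c : C) (x : X), T (scal c x) = scal c (T x)) /\
  (exists M : R, forall x : X, (norm (T x) <= M * norm x)%R).

(* F : C -> L(X) is holomorphic on the open set U with respect to the operator
   norm: at every z0 in U the difference quotients converge in operator norm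
   to some T in L(X).  ||S||_op <= eps is written out as
   forall x, ||S x|| <= eps ||x||. *)
Definition strongly_holomorphic_on {X : NormedModule C_AbsRing}
  (U : C -> Prop) (F : C -> X -> X) : Prop :=
  forall z0 : C, U z0 ->
    exists T : X -> X, bounded_op T /\
      forall eps : R, (0 < eps)%R ->
        exists delta : R, (0 < delta)%R /\
          forall z : C, U z -> z <> z0 -> (Cmod (z - z0)%C < delta)%R ->
            forall x : X,
              (norm (minus (scal (/ (z - z0))%C (minus (F z x) (F z0 x))) (T x))
                 <= eps * norm x)%R.

Definition nonreal (z : C) : Prop := Im z <> 0%R.

(* Main.v *)
Require Import Defs.
From Stdlib Require Import Reals Lra Lia FunctionalExtensionality.
From Coquelicot Require Import Coquelicot.
Open Scope R_scope.

Definition CN (N : nat) (f : R -> R) := forall k, (k <= N)%nat -> forall t, ex_derive_n f k t.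

Lemma Derive_n_Derive f k t : Derive_n (Derive f) k t = Derive_n f (S k) t.
Proof.
  revert t; induction k; intro t; simpl. reflexivity.
  apply Derive_ext. intro; apply IHk.
Qed.

Lemma exn_Derive f k t : ex_derive_n (Derive f) (S k) t <-> ex_derive_n f (S (S k)) t.
Proof.
  simpl. split; apply ex_derive_ext; intro; [|symmetry]; apply (Derive_n_Derive f k).
Qed.

Lemma exn1 f t : ex_derive_n f 1 t <-> ex_derive f t.
Proof. simpl. split; apply ex_derive_ext; intro; reflexivity. Qed.

Lemma CN_S N f : CN (S N) f <-> (forall t, ex_derive f t) /\ CN N (Derive f).
Proof.
  split.
  - intro H. split.
    + intro t. apply (proj1 (exn1 f t)). apply (H 1%nat). apply le_n_S, Nat.le_0_l.
    + intros [|k] Hk t. exact I. apply (proj2 (exn_Derive f k t)). apply (H (S (S k))). apply le_n_S; exact Hk.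
  - intros [H1 H2] [|k] Hk t. exact I.
    destruct k. apply (proj2 (exn1 f t)). exact (H1 t).
    apply (proj1 (exn_Derive f k t)). apply (H2 (S k)). apply le_S_n; exact Hk.
Qed.

Lemma CN_ext N f g : (forall t, f t = g t) -> CN N f -> CN N g.
Proof. intros E H k Hk t. apply ex_derive_n_ext with f; auto. Qed.

Lemma CN_le N f : CN (S N) f -> CN N f.
Proof. intros H k Hk t. apply H. apply le_S; exact Hk. Qed.

Lemma CN_0 f : CN 0 f.
Proof. intros k Hk t. assert (k = 0%nat) by lia. subst. exact I. Qed.

Lemma CN_const N : forall c, CN N (fun _ => c).
Proof.
  induction N; intro c. apply CN_0.
  apply CN_S. split. intro; apply ex_derive_const.
  apply CN_ext with (fun _ => 0). intro; symmetry; apply Derive_const. apply IHN.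
Qed.

Lemma CN_id N : CN N (fun t => t).
Proof.
  destruct N. apply CN_0.
  apply CN_S. split. intro; apply ex_derive_id.
  apply CN_ext with (fun _ => 1). intro; symmetry; apply Derive_id. apply CN_const.
Qed.

Lemma CN_plus N : forall f g, CN N f -> CN N g -> CN N (fun t => f t + g t).
Proof.
  induction N; intros f g Hf Hg. apply CN_0.
  apply CN_S in Hf as [Hf1 Hf2]. apply CN_S in Hg as [Hg1 Hg2].
  apply CN_S. split. intro t; exact (ex_derive_plus f g t (Hf1 t) (Hg1 t)).
  apply CN_ext with (fun t => Derive f t + Derive g t).
  intro; symmetry; apply Derive_plus; auto. apply IHN; auto.
Qed.

Lemma CN_mult N : forall f g, CN N f -> CN N g -> CN N (fun t => f t * g t).
Proof.
  induction N; intros f g Hf Hg. apply CN_0.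
  pose proof (CN_le _ _ Hf) as Hf0. pose proof (CN_le _ _ Hg) as Hg0.
  apply CN_S in Hf as [Hf1 Hf2]. apply CN_S in Hg as [Hg1 Hg2].
  apply CN_S. split. intro; apply ex_derive_mult; auto.
  apply CN_ext with (fun t => Derive f t * g t + f t * Derive g t).
  intro; symmetry; apply Derive_mult; auto. apply CN_plus; apply IHN; auto.
Qed.

Lemma CN_inv N : forall f, CN N f -> (forall t, f t <> 0) -> CN N (fun t => / f t).
Proof.
  induction N; intros f Hf Hnz. apply CN_0.
  pose proof (CN_le _ _ Hf) as Hf0.
  apply CN_S in Hf as [Hf1 Hf2].
  apply CN_S. split. intro; apply ex_derive_inv; auto.
  apply CN_ext with (fun t => (-1) * (Derive f t * (/ f t * / f t))).
  intro; rewrite Derive_inv; auto. specialize (Hnz t). field. auto.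
  apply CN_mult. apply CN_const. apply CN_mult. auto. apply CN_mult; apply IHN; auto.
Qed.

Lemma CN_affine N : forall f a b, CN N f -> CN N (fun t => f (a * t + b)).
Proof.
  induction N; intros f a b Hf. apply CN_0.
  apply CN_S in Hf as [Hf1 Hf2].
  assert (D : forall t, is_derive (fun t => f (a * t + b)) t (a * Derive f (a * t + b))).
  { intro t. apply (is_derive_comp f (fun t => a * t + b)).
    apply Derive_correct. auto.
    auto_derive; auto. ring. }
  apply CN_S. split. intro t; eexists; apply D.
  apply CN_ext with (fun t => a * Derive f (a * t + b)).
  intro; symmetry; apply is_derive_unique; apply D.
  apply CN_mult. apply CN_const. apply IHN; auto.
Qed.

Lemma exp_big m y : 0 <= y -> y^(S m) / INR (Factorial.fact (S m)) <= exp y.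
Proof.
  intro Hy. eapply Rle_trans; [|apply (exp_ge_taylor y (S m) Hy)].
  rewrite tech5.
  assert (0 <= sum_f_R0 (fun k : nat => y ^ k / INR (Factorial.fact k)) m).
  { apply cond_pos_sum. intro n. apply Rdiv_le_0_compat. apply pow_le; auto.
    apply lt_0_INR. apply Factorial.lt_O_fact. }
  lra.
Qed.

Lemma small_bound m h : 0 < h -> (/h)^m * exp (-/h) <= INR (Factorial.fact (S m)) * h.
Proof.
  intro Hh. set (y := /h). assert (Hy : 0 < y) by (apply Rinv_0_lt_compat; auto).
  pose proof (exp_big m y (Rlt_le _ _ Hy)) as H.
  assert (HF : 0 < INR (Factorial.fact (S m))) by (apply lt_0_INR; apply Factorial.lt_O_fact).
  assert (h = / y) by (unfold y; rewrite Rinv_inv; auto).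
  rewrite H0.
  assert (He : exp (-y) * exp y = 1) by (rewrite <- exp_plus; replace (-y+y) with 0 by ring; apply exp_0).
  assert (Hep : 0 < exp (-y)) by apply exp_pos.
  apply Rmult_le_reg_r with (y * exp y). apply Rmult_lt_0_compat; auto; apply exp_pos.
  replace (y ^ m * exp (- y) * (y * exp y)) with (y ^ (S m) * (exp (-y) * exp y)) by (simpl; ring).
  rewrite He. replace (INR (Factorial.fact (S m)) * / y * (y * exp y)) with (INR (Factorial.fact (S m)) * exp y) by (field; lra).
  apply Rmult_le_reg_r with (/ INR (Factorial.fact (S m))). apply Rinv_0_lt_compat; auto.
  replace (INR (Factorial.fact (S m)) * exp y * / INR (Factorial.fact (S m))) with (exp y) by (field; lra).
  rewrite Rmult_1_r. exact H.
Qed.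

Definition E (k : nat) (x : R) : R := if Rlt_dec 0 x then (/x)^k * exp (-/x) else 0.

Lemma E_nonneg k x : 0 <= E k x.
Proof. unfold E. destruct Rlt_dec. apply Rmult_le_pos. apply pow_le. left; apply Rinv_0_lt_compat; auto. left; apply exp_pos. lra. Qed.

Lemma E_pos0 x : 0 < x -> 0 < E 0 x.
Proof. intro. unfold E. destruct Rlt_dec; [|lra]. simpl. rewrite Rmult_1_l. apply exp_pos. Qed.

Lemma E_zero k x : x <= 0 -> E k x = 0.
Proof. intro. unfold E. destruct Rlt_dec; [lra|auto]. Qed.

Lemma E_deriv k x : is_derive (E k) x (-(INR k) * E (S k) x + E (S (S k)) x).
Proof.
  destruct (Rlt_dec 0 x) as [Hx|Hx].
  - assert (Hv : forall j, E j x = (/x)^j * exp (-/x)) by (intro; unfold E; destruct Rlt_dec; [auto|lra]).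
    rewrite !Hv.
    apply is_derive_ext_loc with (fun t => (/t)^k * exp (-/t)).
    + apply (open_gt 0) in Hx. revert Hx. apply filter_imp. intros t Ht. unfold E. destruct Rlt_dec; [auto|lra].
    + auto_derive. lra.
      destruct k; simpl; field; lra.
  - destruct (Rlt_dec x 0) as [Hx'|Hx'].
    + rewrite !E_zero by lra. replace (- INR k * 0 + 0) with 0 by ring.
      apply is_derive_ext_loc with (fun _ => 0).
      * apply (open_lt 0) in Hx'. revert Hx'. apply filter_imp. intros t Ht. rewrite E_zero; lra.
      * exact (@is_derive_const R_AbsRing R_NormedModule 0 x).
    + assert (x = 0) by lra. subst x.
      rewrite !E_zero by lra. replace (- INR k * 0 + 0) with 0 by ring.
      apply is_derive_Reals. intros eps Heps.
      assert (HF : 0 < INR (Factorial.fact (S (S k)))) by (apply lt_0_INR; apply Factorial.lt_O_fact).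
      assert (Hd : 0 < eps / INR (Factorial.fact (S (S k)))) by (apply Rdiv_lt_0_compat; auto).
      exists (mkposreal _ Hd). intros h Hh0 Hh. simpl in Hh.
      rewrite Rplus_0_l, (E_zero k 0) by lra. 
      destruct (Rlt_dec 0 h) as [Hp|Hp].
      * unfold E. destruct Rlt_dec; [|lra].
        replace ((((/ h) ^ k * exp (- / h)) - 0) / h - 0) with ((/h)^(S k) * exp (-/h)) by (simpl; field; lra).
        rewrite Rabs_pos_eq.
        eapply Rle_lt_trans. apply small_bound; auto.
        rewrite Rabs_pos_eq in Hh by lra.
        apply Rmult_lt_reg_r with (/ INR (Factorial.fact (S (S k)))). apply Rinv_0_lt_compat; auto.
        replace (INR (Factorial.fact (S (S k))) * h * / INR (Factorial.fact (S (S k)))) with h by (field; lra). exact Hh.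
        apply Rmult_le_pos. apply pow_le. left; apply Rinv_0_lt_compat; auto. left; apply exp_pos.
      * rewrite E_zero by lra. replace ((0 - 0) / h - 0) with 0 by (field; auto). rewrite Rabs_R0; auto.
Qed.

Lemma CN_E N : forall k, CN N (E k).
Proof.
  induction N; intro k. apply CN_0.
  apply CN_S. split. intro t. eexists. apply E_deriv.
  apply CN_ext with (fun x => -(INR k) * E (S k) x + E (S (S k)) x).
  intro; symmetry; apply is_derive_unique; apply E_deriv.
  apply CN_plus. apply CN_mult. apply CN_const. apply IHN. apply IHN.
Qed.

Definition step (x : R) : R := E 0 x * / (E 0 x + E 0 (1 - x)).

Lemma step_den x : E 0 x + E 0 (1 - x) <> 0.
Proof.
  pose proof (E_nonneg 0 x). pose proof (E_nonneg 0 (1-x)).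
  destruct (Rlt_dec 0 x). pose proof (E_pos0 x r). lra.
  assert (0 < 1 - x) by lra. pose proof (E_pos0 _ H1). lra.
Qed.

Lemma CN_step N : CN N step.
Proof.
  unfold step. apply CN_mult. apply CN_E. apply CN_inv; [|apply step_den].
  apply CN_plus. apply CN_E.
  apply CN_ext with (fun t => E 0 ((-1) * t + 1)). intro; f_equal; ring.
  apply CN_affine. apply CN_E.
Qed.

Lemma step_one x : 1 <= x -> step x = 1.
Proof.
  intro. unfold step. rewrite (E_zero 0 (1 - x)) by lra. pose proof (E_pos0 x ltac:(lra)).
  field. lra.
Qed.

Lemma step_zero x : x <= 0 -> step x = 0.
Proof. intro. unfold step. rewrite (E_zero 0 x) by lra. ring. Qed.

Definition bump (c x : R) : R := step ((-1) * x + c) * step (1 * x + c).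

Lemma CN_bump N c : CN N (bump c).
Proof. unfold bump. apply CN_mult; apply CN_affine; apply CN_step. Qed.

Lemma bump_one c x : Rabs x <= c - 1 -> bump c x = 1.
Proof.
  intro H. unfold bump. apply Rabs_le_between in H. rewrite !step_one by lra. ring.
Qed.

Lemma bump_zero c x : c < Rabs x -> bump c x = 0.
Proof.
  intro H. unfold bump. destruct (Rle_dec 0 x).
  rewrite Rabs_pos_eq in H by lra. rewrite (step_zero ((-1) * x + c)) by lra. ring.
  rewrite Rabs_left in H by lra. rewrite (step_zero (1 * x + c)) by lra. ring.
Qed.

Definition SC (f : R -> C) := (forall N, CN N (fun t => Re (f t))) /\ (forall N, CN N (fun t => Im (f t))).

Lemma SC_smooth f : SC f -> smooth_C f.
Proof. intros [H1 H2] n t. split. apply (H1 n n (le_n n)). apply (H2 n n (le_n n)). Qed.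

Lemma SC_mult f g : SC f -> SC g -> SC (fun t => f t * g t)%C.
Proof.
  intros [F1 F2] [G1 G2]. split; intro N.
  - apply CN_ext with (fun t => Re (f t) * Re (g t) + (-1) * (Im (f t) * Im (g t))).
    intro t. unfold Re, Im. simpl. ring.
    apply CN_plus. apply CN_mult; auto. apply CN_mult. apply CN_const. apply CN_mult; auto.
  - apply CN_ext with (fun t => Re (f t) * Im (g t) + Im (f t) * Re (g t)).
    intro t. unfold Re, Im. simpl. ring.
    apply CN_plus; apply CN_mult; auto.
Qed.

Lemma Cnorm2_nz (c : C) : c <> 0%C -> fst c ^ 2 + snd c ^ 2 <> 0.
Proof.
  intros Hc H. apply Hc. destruct c as [a b]. simpl in H.
  assert (a = 0) by nra. assert (b = 0) by nra. subst. reflexivity.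
Qed.

Lemma SC_inv g : SC g -> (forall t, g t <> 0%C) -> SC (fun t => / g t)%C.
Proof.
  intros [G1 G2] Hg.
  assert (D : forall N, CN N (fun t => / (Re (g t) * Re (g t) + Im (g t) * Im (g t)))).
  { intro N. apply CN_inv. apply CN_plus; apply CN_mult; auto.
    intros t H. apply (Cnorm2_nz (g t) (Hg t)). unfold Re, Im in H. simpl. rewrite <- H. ring. }
  split; intro N.
  - apply CN_ext with (fun t => Re (g t) * / (Re (g t) * Re (g t) + Im (g t) * Im (g t))).
    intro t. unfold Re, Im. simpl. unfold Rdiv. f_equal. f_equal. ring.
    apply CN_mult; auto.
  - apply CN_ext with (fun t => ((-1) * Im (g t)) * / (Re (g t) * Re (g t) + Im (g t) * Im (g t))).
    intro t. unfold Re, Im. simpl. unfold Rdiv. f_equal. ring. f_equal. ring.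
    apply CN_mult; auto. apply CN_mult; auto. apply CN_const.
Qed.

Lemma SC_const c : SC (fun _ => c).
Proof. split; intro; apply CN_const. Qed.

Lemma SC_RtoC f : (forall N, CN N f) -> SC (fun t => RtoC (f t)).
Proof. intro H. split; intro N. apply (H N). apply CN_ext with (fun _ => 0). intro; reflexivity. apply CN_const. Qed.

Lemma SC_lin (z : C) : SC (fun t => z - RtoC t)%C.
Proof.
  split; intro N.
  - apply CN_ext with (fun t => (-1) * t + Re z). intro t. unfold Re; simpl. ring.
    apply CN_plus. apply CN_mult. apply CN_const. apply CN_id. apply CN_const.
  - apply CN_ext with (fun t => Im z). intro t. unfold Im; simpl. ring. apply CN_const.
Qed.

Lemma lin_nz (z : C) t : nonreal z -> (z - RtoC t)%C <> 0%C.
Proof.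
  intros Hz H. apply Hz. apply (f_equal Im) in H. unfold Im in *. simpl in H. lra.
Qed.

Lemma test_SC f : test_fun f -> SC f.
Proof.
  intros [Hs _]. split; intros N k Hk t; apply Hs.
Qed.

Lemma test_div chi z : test_fun chi -> nonreal z -> test_fun (fun xi => chi xi / (z - RtoC xi))%C.
Proof.
  intros Hc Hz. split.
  - apply SC_smooth. unfold Cdiv. apply SC_mult. apply test_SC; auto.
    apply SC_inv. apply SC_lin. intro; apply lin_nz; auto.
  - destruct Hc as [_ [M HM]]. exists M. intros t Ht. rewrite HM by auto. unfold Cdiv. apply Cmult_0_l.
Qed.

Lemma test_mult f g : test_fun f -> test_fun g -> test_fun (fun t => f t * g t)%C.
Proof.
  intros Hf Hg. split.
  - apply SC_smooth. apply SC_mult; apply test_SC; auto.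
  - destruct Hf as [_ [M HM]]. exists M. intros t Ht. rewrite HM by auto. apply Cmult_0_l.
Qed.

Lemma test_scal c f : test_fun f -> test_fun (fun t => c * f t)%C.
Proof.
  intros Hf. split.
  - apply SC_smooth. apply SC_mult. apply SC_const. apply test_SC; auto.
  - destruct Hf as [_ [M HM]]. exists M. intros t Ht. rewrite HM by auto. apply Cmult_0_r.
Qed.

Lemma test_bump c : test_fun (fun t => RtoC (bump c t)).
Proof.
  split. apply SC_smooth. apply SC_RtoC. intro; apply CN_bump.
  exists c. intros t Ht. rewrite bump_zero by auto. reflexivity.
Qed.
Lemma absorb (X : NormedModule C_AbsRing) (Fz Fw Gw : X -> X) (Mf Mg B0 : R) (c : C) :
  (forall x, Fz x = plus (Fw x) (scal c (Fz (Gw x)))) ->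
  (forall x, norm (Fw x) <= Mf * norm x) -> (forall x, norm (Gw x) <= Mg * norm x) ->
  (forall x, norm (Fz x) <= B0 * norm x) -> 0 <= Mf -> 0 <= Mg -> 0 <= B0 ->
  abs c * Mg <= 1/2 ->
  forall x, norm (Fz x) <= 2 * Mf * norm x.
Proof.
  intros HI HF HG HB hMf hMg hB0 hc.
  assert (Hn : forall n x, norm (Fz x) <= (2 * Mf + B0 * (/2)^n) * norm x).
  { induction n; intro x.
    - simpl. pose proof (norm_ge_0 x). specialize (HB x). nra.
    - rewrite HI. eapply Rle_trans. apply norm_triangle.
      eapply Rle_trans. apply Rplus_le_compat_l. exact (norm_scal (V:=X) c (Fz (Gw x))).
      pose proof (HF x). pose proof (IHn (Gw x)). pose proof (HG x).
      pose proof (norm_ge_0 x). pose proof (norm_ge_0 (Gw x)). pose proof (abs_ge_0 c).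
      assert (P : 0 <= (/2)^n) by (apply pow_le; lra).
      assert (abs c * norm (Fz (Gw x)) <= abs c * ((2 * Mf + B0 * (/ 2) ^ n) * (Mg * norm x))).
      { apply Rmult_le_compat_l; auto. eapply Rle_trans. apply H0.
        apply Rmult_le_compat_l; auto. nra. }
      simpl. 
      assert (abs c * ((2 * Mf + B0 * (/ 2) ^ n) * (Mg * norm x)) = (abs c * Mg) * ((2 * Mf + B0 * (/ 2) ^ n) * norm x)) by ring.
      assert ((abs c * Mg) * ((2 * Mf + B0 * (/ 2) ^ n) * norm x) <= 1/2 * ((2 * Mf + B0 * (/ 2) ^ n) * norm x)).
      { apply Rmult_le_compat_r; auto. apply Rmult_le_pos; nra. }
      nra. }
  intro x. apply Rle_plus_epsilon. intros eps Heps.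
  pose proof (norm_ge_0 x).
  assert (Hy : 0 < eps / (B0 * norm x + 1)) by (apply Rdiv_lt_0_compat; nra).
  destruct (pow_lt_1_zero (/2) ltac:(rewrite Rabs_pos_eq; lra) _ Hy) as [N HN].
  specialize (HN N (le_n N)). rewrite Rabs_pos_eq in HN by (apply pow_le; lra).
  eapply Rle_trans. apply (Hn N).
  assert (B0 * norm x * (/2)^N <= eps).
  { assert ((B0 * norm x + 1) * (/2)^N <= eps).
    { apply Rmult_lt_compat_l with (r := B0 * norm x + 1) in HN; [|nra].
      replace ((B0 * norm x + 1) * (eps / (B0 * norm x + 1))) with eps in HN by (field; nra). lra. }
    assert (0 <= (/2)^N) by (apply pow_le; lra). nra. }
  nra.
Qed.

Lemma minus_plus_l (G : AbelianGroup) (a s : G) : minus (plus a s) a = s.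
Proof.
  unfold minus. rewrite (plus_comm a s), <- plus_assoc. transitivity (plus s zero). apply f_equal. apply plus_opp_r. apply plus_zero_r.
Qed.

Section XH.
Variable X : CompleteNormedModule C_AbsRing.
Lemma X_nopp (v : X) : norm (opp v) = norm v.
Proof. exact (norm_opp v). Qed.
Lemma X_mpl (a s : X) : minus (plus a s) a = s.
Proof. exact (minus_plus_l _ a s). Qed.
Lemma X_sassoc (a b : C) (v : X) : scal a (scal b v) = scal (a * b)%C v.
Proof. exact (scal_assoc a b v). Qed.
Lemma X_sopp1 (a : C) (v : X) : a = Copp (RtoC 1) -> scal a v = opp v.
Proof. intro H. subst. exact (scal_opp_one v). Qed.
Lemma X_mopp (p q : X) : minus (opp p) (opp q) = opp (minus p q).
Proof. unfold minus. symmetry. exact (opp_plus p (opp q)). Qed.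
End XH.

Theorem lemma2p1 (X : CompleteNormedModule C_AbsRing) (A : (R -> C) -> X -> X)
  (A_bounded : forall phi, test_fun phi -> bounded_op (A phi))
  (A_add : forall phi psi, test_fun phi -> test_fun psi ->
     forall x, A (fun t => (phi t + psi t)%C) x = plus (A phi x) (A psi x))
  (A_scal : forall (c : C) phi, test_fun phi ->
     forall x, A (fun t => (c * phi t)%C) x = scal c (A phi x))
  (A_mul : forall phi psi, test_fun phi -> test_fun psi ->
     forall x, A (fun t => (phi t * psi t)%C) x = A phi (A psi x)) :
  forall chi : R -> C, test_fun chi ->
    strongly_holomorphic_on nonreal
      (fun z : C => A (fun xi : R => (chi xi / (z - RtoC xi))%C)).
Proof.
  intros chi Hchi w Hw.
  pose proof Hchi as [Hcs [M HM]].
  set (c := Rabs M + 1).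
  set (psi := fun t => RtoC (bump c t)).
  assert (Hpsi : test_fun psi) by apply test_bump.
  set (f := fun (z : C) (xi : R) => (chi xi / (z - RtoC xi))%C).
  set (g := fun xi : R => (psi xi / (w - RtoC xi))%C).
  assert (Hf : forall z, nonreal z -> test_fun (f z)) by (intros; apply test_div; auto).
  assert (Hg : test_fun g) by (apply test_div; auto).
  change (fun z : C => A (fun xi : R => (chi xi / (z - RtoC xi))%C)) with (fun z => A (f z)).
  assert (KEY : forall z, nonreal z -> forall x, A (f z) x = plus (A (f w) x) (scal (w - z)%C (A (f z) (A g x)))).
  { intros z Hz x.
    assert (Ept : forall t, f z t = (f w t + (w - z) * (f z t * g t))%C).
    { intro t. unfold f, g, psi. pose proof (lin_nz z t Hz). pose proof (lin_nz w t Hw).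
      destruct (Classical_Prop.classic (chi t = 0%C)) as [Hc0|Hc0].
      - rewrite Hc0. field. auto.
      - assert (bump c t = 1).
        { apply bump_one. unfold c. destruct (Rlt_dec M (Rabs t)). exfalso; apply Hc0; apply HM; auto.
          pose proof (Rle_abs M). lra. }
        rewrite H1. field. auto. }
    assert (E1 : A (f z) x = A (fun t => (f w t + (w - z) * (f z t * g t))%C) x).
    { f_equal. apply functional_extensionality. exact Ept. }
    rewrite E1 at 1. rewrite A_add; auto.
    rewrite A_scal. rewrite A_mul; auto.
    apply test_mult; auto.
    apply test_scal. apply test_mult; auto. }
  cbv beta.
  destruct (A_bounded _ (Hf w Hw)) as [Fadd [Fscal [Mf HMf]]].
  destruct (A_bounded _ Hg) as [Gadd [Gscal [Mg HMg]]].
  set (Mf' := Rmax 0 Mf). set (Mg' := Rmax 1 Mg).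
  assert (hMf : 0 <= Mf') by apply Rmax_l.
  assert (hMg : 1 <= Mg') by apply Rmax_l.
  assert (HMf' : forall x, norm (A (f w) x) <= Mf' * norm x).
  { intro x. eapply Rle_trans. apply HMf. apply Rmult_le_compat_r. apply norm_ge_0. apply Rmax_r. }
  assert (HMg' : forall x, norm (A g x) <= Mg' * norm x).
  { intro x. eapply Rle_trans. apply HMg. apply Rmult_le_compat_r. apply norm_ge_0. apply Rmax_r. }
  exists (fun x => opp (A (f w) (A g x))). split.
  - split; [|split].
    + intros x y. rewrite Gadd, Fadd. exact (opp_plus (A (f w) (A g x)) (A (f w) (A g y))).
    + intros c0 x. rewrite Gscal, Fscal. symmetry. exact (scal_opp_r c0 (A (f w) (A g x))).
    + exists (Mf' * Mg'). intro x. rewrite X_nopp. eapply Rle_trans. apply HMf'.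
      rewrite Rmult_assoc. apply Rmult_le_compat_l; auto.
  - intros eps Heps.
    set (K := 2 * Mf' * Mg' * Mg').
    assert (hK : 0 <= K) by (unfold K; nra).
    assert (hd1 : 0 < / (2 * Mg')) by (apply Rinv_0_lt_compat; lra).
    assert (hd2 : 0 < eps / (K + 1)) by (apply Rdiv_lt_0_compat; lra).
    exists (Rmin (/ (2 * Mg')) (eps / (K + 1))). split. apply Rmin_glb_lt; auto.
    intros z Hz Hzw Hd x.
    assert (Hd1 : Cmod (z - w) < / (2 * Mg')) by (eapply Rlt_le_trans; [apply Hd|apply Rmin_l]).
    assert (Hd2 : Cmod (z - w) < eps / (K + 1)) by (eapply Rlt_le_trans; [apply Hd|apply Rmin_r]).
    assert (Habs : abs (w - z)%C = Cmod (z - w)).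
    { change (Cmod (w - z) = Cmod (z - w)). replace (w - z)%C with (- (z - w))%C by ring. apply Cmod_opp. }
    destruct (A_bounded _ (Hf z Hz)) as [_ [_ [Bz HBz]]].
    assert (HBz' : forall x, norm (A (f z) x) <= Rmax 0 Bz * norm x).
    { intro y. eapply Rle_trans. apply HBz. apply Rmult_le_compat_r. apply norm_ge_0. apply Rmax_r. }
    assert (Hbnd : forall y, norm (A (f z) y) <= 2 * Mf' * norm y).
    { apply (absorb X (A (f z)) (A (f w)) (A g) Mf' Mg' (Rmax 0 Bz) (w - z)%C).
      apply KEY; auto. exact HMf'. exact HMg'. exact HBz'. exact hMf. lra. apply Rmax_l. rewrite Habs.
      apply Rmult_lt_compat_r with (r := Mg') in Hd1; [|lra].
      replace (/ (2 * Mg') * Mg') with (1/2) in Hd1 by (field; lra). lra. }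
    assert (Hzw' : (z - w)%C <> 0%C).
    { intro H. apply Hzw. replace z with ((z - w) + w)%C by ring. rewrite H. ring. }
    change (norm (minus (scal (/ (z - w))%C (minus (A (f z) x) (A (f w) x))) (opp (A (f w) (A g x)))) <= eps * norm x).
    rewrite (KEY z Hz x) at 1. rewrite X_mpl. rewrite X_sassoc.
    rewrite X_sopp1. 2:{ field. auto. }
    change (norm (minus (opp (A (f z) (A g x))) (opp (A (f w) (A g x)))) <= eps * norm x).
    rewrite X_mopp, X_nopp.
    rewrite (KEY z Hz (A g x)) at 1.
    change (norm (minus (plus (A (f w) (A g x)) (scal (w - z)%C (A (f z) (A g (A g x))))) (A (f w) (A g x))) <= eps * norm x).
    rewrite X_mpl.
    eapply Rle_trans. exact (norm_scal (V:=X) (w - z)%C (A (f z) (A g (A g x)))).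
    rewrite Habs.
    assert (N1 : norm (A (f z) (A g (A g x))) <= K * norm x).
    { eapply Rle_trans. apply Hbnd. unfold K.
      pose proof (HMg' (A g x)). pose proof (HMg' x). pose proof (norm_ge_0 (A g x)). pose proof (norm_ge_0 x).
      assert (norm (A g (A g x)) <= Mg' * Mg' * norm x).
      { eapply Rle_trans. apply H. rewrite Rmult_assoc. apply Rmult_le_compat_l; lra. }
      replace (2 * Mf' * Mg' * Mg' * norm x) with (2 * Mf' * (Mg' * Mg' * norm x)) by ring.
      apply Rmult_le_compat_l; lra. }
    pose proof (Cmod_ge_0 (z - w)%C). pose proof (norm_ge_0 x).
    apply Rmult_lt_compat_r with (r := K + 1) in Hd2; [|lra].
    replace (eps / (K + 1) * (K + 1)) with eps in Hd2 by (field; lra).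
    eapply Rle_trans. apply Rmult_le_compat_l. auto. apply N1.
    nra.
Qed.
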